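(* For every $\varepsilon>0$ there exists a convex polygon $C$ in the plane such that $C$ has a unique minimum-area enclosing rectangle $R_A$ and a unique minimum-perimeter enclosing rectangle $R_P$, and the orientations of $R_A$ and $R_P$ differ by an angle greater than $90^\circ-\varepsilon$.
   Context: For a convex region $C$ in the plane, an enclosing rectangle of $C$ is a rectangle (of arbitrary position and rotation) containing $C$. A minimum-area (resp. minimum-perimeter) enclosing rectangle is an enclosing rectangle of least area (resp. least perimeter) among all enclosing rectangles of $C$. The orientation of a rectangle is the direction of the line containing one of its longer sides. The difference in orientation of two rectangles is the (unsigned) angle in $[0^\circ,90^\circ]$ between these two lines. *)

(* Defs.v *)
From Stdlib Require Import Reals List.
Import ListNotations.
Open Scope R_scope.

Definition pt := (R * R)%type.

Definition wsum (w : list R) (P : list pt) : pt :=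
  fold_right (fun (ap : R * pt) (acc : pt) =>
                (fst ap * fst (snd ap) + fst acc, fst ap * snd (snd ap) + snd acc))
             (0, 0) (combine w P).

Definition conv_hull (P : list pt) (x : pt) : Prop :=
  exists w : list R,
    length w = length P /\ Forall (fun a => 0 <= a) w /\
    fold_right Rplus 0 w = 1 /\ x = wsum w P.

Definition dist2 (x y : pt) : R :=
  (fst x - fst y) ^ 2 + (snd x - snd y) ^ 2.

(* A convex polygon: convex hull of finitely many points, with nonempty interior. *)
Definition convex_polygon (P : list pt) : Prop :=
  exists (c : pt) (r : R), 0 < r /\ forall y, dist2 y c < r ^ 2 -> conv_hull P y.

(* A rectangle (arbitrary position and rotation): center, rotation angle theta,
   half side lengths ha (along (cos theta, sin theta)) and hb (along
   (-sin theta, cos theta)), both positive. *)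
Record rect := Rect { rc : pt; rth : R; ha : R; hb : R }.

Definition valid_rect (r : rect) : Prop := 0 < ha r /\ 0 < hb r.

Definition dir_u (r : rect) : pt := (cos (rth r), sin (rth r)).
Definition dir_v (r : rect) : pt := (- sin (rth r), cos (rth r)).

Definition dot (x y : pt) : R := fst x * fst y + snd x * snd y.
Definition sub (x y : pt) : pt := (fst x - fst y, snd x - snd y).

Definition in_rect (r : rect) (x : pt) : Prop :=
  Rabs (dot (sub x (rc r)) (dir_u r)) <= ha r /\
  Rabs (dot (sub x (rc r)) (dir_v r)) <= hb r.

Definition rect_area (r : rect) : R := (2 * ha r) * (2 * hb r).
Definition rect_perimeter (r : rect) : R := 2 * (2 * ha r) + 2 * (2 * hb r).

Definition encloses (r : rect) (C : pt -> Prop) : Prop :=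
  valid_rect r /\ forall x, C x -> in_rect r x.

Definition min_area_rect (C : pt -> Prop) (r : rect) : Prop :=
  encloses r C /\ forall r', encloses r' C -> rect_area r <= rect_area r'.

Definition min_perimeter_rect (C : pt -> Prop) (r : rect) : Prop :=
  encloses r C /\ forall r', encloses r' C -> rect_perimeter r <= rect_perimeter r'.

Definition same_rect (r r' : rect) : Prop := forall x, in_rect r x <-> in_rect r' x.

Definition unique_min_area (C : pt -> Prop) (r : rect) : Prop :=
  min_area_rect C r /\ forall r', min_area_rect C r' -> same_rect r r'.

Definition unique_min_perimeter (C : pt -> Prop) (r : rect) : Prop :=
  min_perimeter_rect C r /\ forall r', min_perimeter_rect C r' -> same_rect r r'.

Definition orientation_dir (r : rect) (d : pt) : Prop :=
  (hb r <= ha r /\ d = dir_u r) \/ (ha r <= hb r /\ d = dir_v r).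

(* unsigned angle in [0, PI/2] between the lines with unit directions d1, d2 *)
Definition line_angle (d1 d2 : pt) : R := acos (Rabs (dot d1 d2)).

(* Main.v *)
Require Import Defs.
From Stdlib Require Import Reals List.
Open Scope R_scope.
From Stdlib Require Import Lra Psatz.
Import ListNotations.
Open Scope R_scope.
Definition dd (s:R) := 8*s.
Definition mm (s:R) := 1 - 8*s.
Definition cc (s:R) := 1 - 2*s.
Definition bb (s:R) := 1 - s.
Definition SS (s:R) := bb s + mm s.
Definition NN (s:R) := (SS s - mm s * dd s) * (cc s * dd s + bb s * SS s).
Definition LL2 (s:R) := SS s ^ 2 + dd s ^ 2.

Lemma idA1 s x y : dd s^2 * (LL2 s * ((x - mm s*y) * (cc s*y + bb s*x)) - NN s * (x^2+y^2)) =
  (SS s*y - dd s*x)^2 * (16*s^2 - 72*s^3 + 448*s^4) + 2*(-(SS s*y - dd s*x))*y*(144*s^2 - 1424*s^3 + 6756*s^4 - 8672*s^5).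
Proof. unfold LL2,NN,SS,dd,mm,cc,bb. ring. Qed.

Lemma idA2 s x y : (SS s-dd s)^2 * (LL2 s * (((1-dd s)*x + bb s*y) * (cc s*y + bb s*x)) - NN s * (x^2+y^2)) =
  2*(x-y)*(SS s*y - dd s*x)*(8 - 188*s + 1746*s^2 - 8043*s^3 + 17065*s^4 - 19601/2*s^5)
  + (SS s*y - dd s*x)^2*(8 - 160*s + 1222*s^2 - 4306*s^3 + 4811*s^4).
Proof. unfold LL2,NN,SS,dd,mm,cc,bb. field. Qed.

Lemma idA3 s x y : (LL2 s * (((1-dd s)*x + bb s*y) * (y + mm s*x)) - NN s * (x^2+y^2)) =
  x^2*(8 - 200*s + 1762*s^2 - 7376*s^3 + 11336*s^4) + 2*x*(y-x)*(4 - 70*s + 483*s^2 - 2897/2*s^3 + 1028*s^4)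
  + (y-x)^2*(16*s^2 - 72*s^3 + 448*s^4).
Proof. unfold LL2,NN,SS,dd,mm,cc,bb. field. Qed.

Lemma idP1 s x y : dd s^2 * (((x - mm s*y) + (cc s*y + bb s*x))^2 - (1+bb s)^2*(x^2+y^2)) =
  2*(-(SS s*y - dd s*x))*y*(96*s^2 - 48*s^3) + y^2*(128*s^2 - 1664*s^3 + 3104*s^4).
Proof. unfold LL2,NN,SS,dd,mm,cc,bb. ring. Qed.

Lemma idP2 s x y : (SS s-dd s)^2 * ((((1-dd s)*x + bb s*y) + (cc s*y + bb s*x))^2 - (1+bb s)^2*(x^2+y^2)) =
  (x-y)^2*(128*s^2 - 1664*s^3 + 3104*s^4) + 2*(x-y)*(SS s*y - dd s*x)*(8 - 116*s + 462*s^2 - 683*s^3) + (SS s*y - dd s*x)^2*(8 - 88*s + 142*s^2).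
Proof. unfold LL2,NN,SS,dd,mm,cc,bb. ring. Qed.

Lemma idP3 s x y : ((((1-dd s)*x + bb s*y) + (y + mm s*x))^2 - (1+bb s)^2*(x^2+y^2)) =
  x^2*(8 - 128*s + 287*s^2) + 2*x*(y-x)*(4 - 34*s + 16*s^2).
Proof. unfold LL2,NN,SS,dd,mm,cc,bb. ring. Qed.
Ltac ppos := intros; match goal with H : 0 < ?s <= _ |- _ =>
  destruct H; assert (0 < s^2) by nra; assert (s^2 <= s/1000) by nra;
  assert (0 < s^3) by nra; assert (s^3 <= s^2/1000) by nra;
  assert (0 < s^4) by nra; assert (s^4 <= s^3/1000) by nra;
  assert (0 < s^5) by nra; assert (s^5 <= s^4/1000) by nra; nra end.
Lemma pA1r1 s : 0 < s <= 1/1000 -> 0 < 16*s^2 - 72*s^3 + 448*s^4. ppos. Qed.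
Lemma pA1c s : 0 < s <= 1/1000 -> 0 < 144*s^2 - 1424*s^3 + 6756*s^4 - 8672*s^5. ppos. Qed.
Lemma pA2c s : 0 < s <= 1/1000 -> 0 < 8 - 188*s + 1746*s^2 - 8043*s^3 + 17065*s^4 - 19601/2*s^5. ppos. Qed.
Lemma pA2r2 s : 0 < s <= 1/1000 -> 0 < 8 - 160*s + 1222*s^2 - 4306*s^3 + 4811*s^4. ppos. Qed.
Lemma pA3r1 s : 0 < s <= 1/1000 -> 0 < 8 - 200*s + 1762*s^2 - 7376*s^3 + 11336*s^4. ppos. Qed.
Lemma pA3c s : 0 < s <= 1/1000 -> 0 < 4 - 70*s + 483*s^2 - 2897/2*s^3 + 1028*s^4. ppos. Qed.
Lemma pP1c s : 0 < s <= 1/1000 -> 0 < 96*s^2 - 48*s^3. ppos. Qed.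
Lemma pP1r2 s : 0 < s <= 1/1000 -> 0 < 128*s^2 - 1664*s^3 + 3104*s^4. ppos. Qed.
Lemma pP2c s : 0 < s <= 1/1000 -> 0 < 8 - 116*s + 462*s^2 - 683*s^3. ppos. Qed.
Lemma pP2r2 s : 0 < s <= 1/1000 -> 0 < 8 - 88*s + 142*s^2. ppos. Qed.
Lemma pP3r1 s : 0 < s <= 1/1000 -> 0 < 8 - 128*s + 287*s^2. ppos. Qed.
Lemma pP3c s : 0 < s <= 1/1000 -> 0 < 4 - 34*s + 16*s^2. ppos. Qed.

Definition pdot (p:pt) (x y:R) := fst p * x + snd p * y.
Definition v1 s : pt := (1, - mm s).
Definition v2 s : pt := (1 - dd s, bb s).
Definition v3 s : pt := (- cc s, bb s).
Definition HB s x y H1 H2 := forall p, In p [v1 s; v2 s; v3 s] ->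
  Rabs (pdot p x y) <= H1 /\ Rabs (pdot p (-y) x) <= H2.

Lemma abs_le z h : Rabs z <= h -> -h <= z <= h.
Proof. unfold Rabs; destruct (Rcase_abs z); lra. Qed.

Lemma HB_unpack s x y H1 H2 : HB s x y H1 H2 ->
  -H1 <= x - mm s * y <= H1 /\ -H1 <= (1 - dd s)*x + bb s*y <= H1 /\ -H1 <= - cc s * x + bb s * y <= H1 /\
  -H2 <= - y - mm s * x <= H2 /\ -H2 <= -(1-dd s)*y + bb s * x <= H2 /\ -H2 <= cc s * y + bb s * x <= H2.
Proof.
  intro H.
  destruct (H (v1 s)) as [a1 b1]; [simpl; auto|].
  destruct (H (v2 s)) as [a2 b2]; [simpl; auto|].
  destruct (H (v3 s)) as [a3 b3]; [simpl; auto|].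
  unfold pdot, v1, v2, v3 in *; simpl in *.
  apply abs_le in a1, a2, a3, b1, b2, b3.
  repeat split; lra.
Qed.

Lemma L_prod a b A B : 0<=a -> 0<=b -> a<=A -> b<=B -> a*b <= A*B.
Proof. intros. nra. Qed.
Lemma L_eqprod a b A B : 0<a -> 0<b -> a<=A -> b<=B -> A*B <= a*b -> A = a /\ B = b.
Proof. intros ha hb hA hB h.
  assert (a*b <= a*B) by (apply Rmult_le_compat_l; lra).
  assert (a*B <= A*B) by (apply Rmult_le_compat_r; lra).
  assert (a*B = a*b) by lra.
  assert (B = b) by (apply (Rmult_eq_reg_l a); lra).
  subst. split; [|reflexivity]. apply (Rmult_eq_reg_r b); lra. Qed.
Lemma L_pos k z w : 0 < k -> k * z = w -> 0 <= w -> 0 <= z.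
Proof. intros. nra. Qed.
Lemma L_pos' k z w : 0 < k -> k * z = w -> 0 < w -> 0 < z.
Proof. intros. nra. Qed.
Lemma L_sq0 l A : 0 < A -> l^2 * A <= 0 -> l = 0.
Proof. intros. destruct (Req_dec l 0); auto.
  assert (0 < l*l) by (apply Rsqr_pos_lt; auto). exfalso. nra. Qed.
Lemma L_terms_nonneg u v A B : 0 <= u -> 0 <= v -> 0 < A -> 0 < B -> 0 <= u^2*A + 2*u*v*B.
Proof. intros. apply Rplus_le_le_0_compat; repeat apply Rmult_le_pos; try lra.
Qed.
Lemma L_quad_pos u v A B C : 0 <= u -> 0 <= v -> 0 < A -> 0 < B -> 0 < C -> (u <> 0 \/ v <> 0) ->
  0 < u^2*A + 2*u*v*B + v^2*C.
Proof. intros u0 v0 a b c h.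
  assert (0 <= u^2*A) by (apply Rmult_le_pos; [apply pow_le|]; lra).
  assert (0 <= v^2*C) by (apply Rmult_le_pos; [apply pow_le|]; lra).
  assert (0 <= 2*u*v*B) by (repeat apply Rmult_le_pos; lra).
  destruct h as [h|h].
  - assert (0 < u^2*A) by (apply Rmult_lt_0_compat; [apply pow_lt|]; lra). lra.
  - assert (0 < v^2*C) by (apply Rmult_lt_0_compat; [apply pow_lt|]; lra). lra. Qed.
Lemma L_unit_nz x y : x^2+y^2 = 1 -> x <> 0 \/ y <> 0.
Proof. intros. destruct (Req_dec x 0); [right; intro; subst; nra | left; auto]. Qed.


Lemma sum0 a b : 0 <= a -> 0 <= b -> a + b <= 0 -> a = 0 /\ b = 0.
Proof. intros. lra. Qed.
Lemma m0 a A : 0 < A -> a * A = 0 -> a = 0.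
Proof. intros. apply (Rmult_eq_reg_r A); lra. Qed.
Lemma sq0 l : l^2 = 0 -> l = 0.
Proof. intros H. simpl in H. rewrite Rmult_1_r in H. apply Rmult_integral in H; destruct H; auto. Qed.
Section Facts.
Variable s : R.
Hypothesis Hs : 0 < s <= 1/1000.
Lemma fSd : SS s - mm s * dd s > 0. Proof. unfold SS, mm, dd, bb; nra. Qed.
Lemma fd : dd s > 0. Proof. unfold dd; lra. Qed.
Lemma fS : SS s > 0. Proof. unfold SS, mm, bb; lra. Qed.
Lemma fSmd : SS s - dd s > 0. Proof. unfold SS, mm, dd, bb; lra. Qed.
Lemma fm : 0 < mm s. Proof. unfold mm; lra. Qed.
Lemma fb : 0 < bb s. Proof. unfold bb; lra. Qed.
Lemma fc : 0 < cc s. Proof. unfold cc; lra. Qed.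
Lemma fd1 : 0 < 1 - dd s. Proof. unfold dd; lra. Qed.
Lemma fL2 : 0 < LL2 s. Proof. unfold LL2. pose proof fS. nra. Qed.
End Facts.


Lemma sqpos l : 0 <= l^2. Proof. apply pow2_ge_0. Qed.

Lemma S_a l v A B : l <= 0 -> 0 <= v -> 0 < A -> 0 < B ->
  0 <= l^2*A + 2*(-l)*v*B /\ (l^2*A + 2*(-l)*v*B <= 0 -> l = 0).
Proof. intros. assert (0 <= l^2*A) by (apply Rmult_le_pos; [apply sqpos|lra]).
  assert (0 <= 2*(-l)*v*B) by (repeat apply Rmult_le_pos; lra).
  split; [lra|]. intro. apply sq0, (m0 _ A); lra. Qed.
Lemma S_b u l B C : 0 <= u -> 0 <= l -> 0 < B -> 0 < C ->
  0 <= 2*u*l*B + l^2*C /\ (2*u*l*B + l^2*C <= 0 -> l = 0).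
Proof. intros. assert (0 <= l^2*C) by (apply Rmult_le_pos; [apply sqpos|lra]).
  assert (0 <= 2*u*l*B) by (repeat apply Rmult_le_pos; lra).
  split; [lra|]. intro. apply sq0, (m0 _ C); lra. Qed.
Lemma S_c l y B C : l <= 0 -> 0 <= y -> 0 < B -> 0 < C ->
  0 <= 2*(-l)*y*B + y^2*C /\ (2*(-l)*y*B + y^2*C <= 0 -> y = 0).
Proof. intros. assert (0 <= y^2*C) by (apply Rmult_le_pos; [apply sqpos|lra]).
  assert (0 <= 2*(-l)*y*B) by (repeat apply Rmult_le_pos; lra).
  split; [lra|]. intro. apply sq0, (m0 _ C); lra. Qed.
Lemma S_d x w A B : 0 <= x -> 0 <= w -> 0 < A -> 0 < B ->
  0 <= x^2*A + 2*x*w*B /\ (x^2*A + 2*x*w*B <= 0 -> x = 0).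
Proof. intros. assert (0 <= x^2*A) by (apply Rmult_le_pos; [apply sqpos|lra]).
  assert (0 <= 2*x*w*B) by (repeat apply Rmult_le_pos; lra).
  split; [lra|]. intro. apply sq0, (m0 _ A); lra. Qed.

Lemma kz k z w : 0 < k -> k * z = w -> (0 <= w -> 0 <= z) /\ (0 < w -> 0 < z) /\ (z <= 0 -> w <= 0).
Proof. intros. subst. split; [|split]; intros.
  - apply (Rmult_le_reg_l k); lra.
  - apply (Rmult_lt_reg_l k); lra.
  - assert (k * z <= k * 0) by (apply Rmult_le_compat_l; lra). lra. Qed.

Lemma area_q s x y H1 H2 : 0 < s <= 1/1000 -> 0 <= x -> 0 <= y -> x^2+y^2 = 1 -> HB s x y H1 H2 ->
  NN s <= LL2 s * (H1*H2) /\
  (LL2 s * (H1*H2) <= NN s -> SS s * y = dd s * x /\ H1 = x - mm s * y /\ H2 = cc s * y + bb s * x).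
Proof.
  intros Hs Hx Hy Hu HH.
  apply HB_unpack in HH.
  destruct HH as [[a1 a1'] [[a2 a2'] [[a3 a3'] [[b1 b1'] [[b2 b2'] [b3 b3']]]]]].
  pose proof (idA1 s x y) as I1. pose proof (idA2 s x y) as I2. pose proof (idA3 s x y) as I3.
  rewrite Hu, Rmult_1_r in I1, I2, I3.
  pose proof (fSd s Hs). pose proof (fd s Hs). pose proof (fS s Hs). pose proof (fSmd s Hs).
  pose proof (fm s Hs). pose proof (fb s Hs). pose proof (fc s Hs). pose proof (fd1 s Hs).
  pose proof (fL2 s Hs) as HL2.
  pose proof (L_unit_nz x y Hu) as Hnz.
  assert (Hk1 : 0 < dd s ^ 2) by (apply pow_lt; lra).
  assert (Hk2 : 0 < (SS s - dd s) ^ 2) by (apply pow_lt; lra).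
  assert (HQ : 0 <= cc s * y + bb s * x).
  { assert (0 <= cc s * y) by (apply Rmult_le_pos; lra).
    assert (0 <= bb s * x) by (apply Rmult_le_pos; lra). lra. }
  assert (HP2 : 0 <= (1 - dd s) * x + bb s * y).
  { assert (0 <= (1 - dd s) * x) by (apply Rmult_le_pos; lra).
    assert (0 <= bb s * y) by (apply Rmult_le_pos; lra). lra. }
  assert (HQ3 : 0 <= y + mm s * x).
  { assert (0 <= mm s * x) by (apply Rmult_le_pos; lra). lra. }
  destruct (Rle_dec (SS s * y - dd s * x) 0) as [L1|L1].
  -
    assert (HP : 0 <= x - mm s * y).
    { assert (mm s * (SS s*y) <= mm s * (dd s * x)) by (apply Rmult_le_compat_l; lra).
      assert (0 <= (SS s - mm s * dd s) * x) by (apply Rmult_le_pos; lra).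
      assert (0 <= SS s * (x - mm s * y)) by lra.
      apply (kz (SS s) _ (SS s * (x - mm s * y))); lra. }
    assert (HPQ := L_prod _ _ _ _ HP HQ a1' b3').
    destruct (S_a (SS s * y - dd s * x) y _ _ L1 Hy (pA1r1 s Hs) (pA1c s Hs)) as [Sa Sa'].
    destruct (kz _ _ _ Hk1 I1) as [K1 [_ K3]].
    specialize (K1 Sa).
    assert (HL := Rmult_le_compat_l _ _ _ (Rlt_le _ _ HL2) HPQ).
    split; [lra|].
    intro Heq.
    assert (Hl : SS s * y - dd s * x = 0) by (apply Sa'; apply K3; lra).
    assert (Hz : LL2 s * ((x - mm s * y) * (cc s * y + bb s * x)) - NN s = 0).
    { rewrite Hl in I1. apply (m0 _ (dd s ^ 2)); [lra|]. rewrite Rmult_comm, I1. ring. }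
    assert (Hxp : 0 < x).
    { destruct (Req_dec x 0) as [e|e]; [|lra]. exfalso. subst x.
      assert (SS s * y = 0) by lra.
      assert (y = 0) by (apply (Rmult_eq_reg_l (SS s)); lra). destruct Hnz; auto. }
    assert (HPp : 0 < x - mm s * y).
    { assert (E : SS s * y = dd s * x) by lra.
      assert (E2 : SS s * (x - mm s * y) = (SS s - mm s * dd s) * x).
      { replace (SS s * (x - mm s * y)) with (SS s * x - mm s * (SS s * y)) by ring. rewrite E. ring. }
      assert (0 < (SS s - mm s * dd s) * x) by (apply Rmult_lt_0_compat; lra).
      apply (kz (SS s) _ (SS s * (x - mm s * y))); [lra|reflexivity|]. lra. }
    assert (HQp : 0 < cc s * y + bb s * x).
    { assert (0 <= cc s * y) by (apply Rmult_le_pos; lra).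
      assert (0 < bb s * x) by (apply Rmult_lt_0_compat; lra). lra. }
    assert (H12 : H1 * H2 <= (x - mm s * y) * (cc s * y + bb s * x)).
    { apply (Rmult_le_reg_l (LL2 s)); lra. }
    destruct (L_eqprod _ _ _ _ HPp HQp a1' b3' H12). repeat split; lra.
  - assert (L1' : 0 < SS s * y - dd s * x) by lra.
    destruct (Rle_dec y x) as [Y|Y].
    + assert (HPQ := L_prod _ _ _ _ HP2 HQ a2' b3').
      destruct (S_b (x - y) (SS s * y - dd s * x) _ _ ltac:(lra) ltac:(lra) (pA2c s Hs) (pA2r2 s Hs)) as [Sb Sb'].
      destruct (kz _ _ _ Hk2 I2) as [K1 [_ K3]].
      specialize (K1 Sb).
      assert (HL := Rmult_le_compat_l _ _ _ (Rlt_le _ _ HL2) HPQ).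
      split; [lra|].
      intro Heq. exfalso.
      assert (SS s * y - dd s * x = 0) by (apply Sb'; apply K3; lra). lra.
    + assert (HQ3' : y + mm s * x <= H2) by lra.
      assert (HPQ := L_prod _ _ _ _ HP2 HQ3 a2' HQ3').
      assert (Q := L_quad_pos x (y - x) _ _ _ Hx ltac:(lra) (pA3r1 s Hs) (pA3c s Hs) (pA1r1 s Hs) ltac:(right; lra)).
      assert (HL := Rmult_le_compat_l _ _ _ (Rlt_le _ _ HL2) HPQ).
      split; [lra|].
      intro Heq. exfalso. lra.
Qed.

Lemma sq_ge a b : 0 <= a -> 0 <= b -> b^2 <= a^2 -> b <= a.
Proof. intros. destruct (Rle_dec b a); auto. exfalso. nra. Qed.
Lemma sq_le a b : 0 <= a -> a <= b -> a^2 <= b^2.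
Proof. intros. nra. Qed.
Lemma x1 x : 0 <= x -> x^2 + 0^2 = 1 -> x = 1.
Proof. intros. nra. Qed.

Lemma perim_q s x y H1 H2 : 0 < s <= 1/1000 -> 0 <= x -> 0 <= y -> x^2+y^2 = 1 -> HB s x y H1 H2 ->
  1 + bb s <= H1 + H2 /\
  (H1 + H2 <= 1 + bb s -> (x = 1 /\ y = 0 /\ H1 = 1 /\ H2 = bb s) \/ (x = 0 /\ y = 1 /\ H1 = bb s /\ H2 = 1)).
Proof.
  intros Hs Hx Hy Hu HH.
  apply HB_unpack in HH.
  destruct HH as [[a1 a1'] [[a2 a2'] [[a3 a3'] [[b1 b1'] [[b2 b2'] [b3 b3']]]]]].
  pose proof (idP1 s x y) as I1. pose proof (idP2 s x y) as I2. pose proof (idP3 s x y) as I3.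
  rewrite Hu, Rmult_1_r in I1, I2, I3.
  pose proof (fSd s Hs). pose proof (fd s Hs). pose proof (fS s Hs). pose proof (fSmd s Hs).
  pose proof (fm s Hs). pose proof (fb s Hs). pose proof (fc s Hs). pose proof (fd1 s Hs).
  pose proof (L_unit_nz x y Hu) as Hnz.
  assert (Hk1 : 0 < dd s ^ 2) by (apply pow_lt; lra).
  assert (Hk2 : 0 < (SS s - dd s) ^ 2) by (apply pow_lt; lra).
  assert (HQ : 0 <= cc s * y + bb s * x).
  { assert (0 <= cc s * y) by (apply Rmult_le_pos; lra).
    assert (0 <= bb s * x) by (apply Rmult_le_pos; lra). lra. }
  assert (HP2 : 0 <= (1 - dd s) * x + bb s * y).
  { assert (0 <= (1 - dd s) * x) by (apply Rmult_le_pos; lra).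
    assert (0 <= bb s * y) by (apply Rmult_le_pos; lra). lra. }
  assert (HQ3 : 0 <= y + mm s * x).
  { assert (0 <= mm s * x) by (apply Rmult_le_pos; lra). lra. }
  assert (Hb1 : 0 <= 1 + bb s) by lra.
  destruct (Rle_dec (SS s * y - dd s * x) 0) as [L1|L1].
  - assert (HP : 0 <= x - mm s * y).
    { assert (mm s * (SS s*y) <= mm s * (dd s * x)) by (apply Rmult_le_compat_l; lra).
      assert (0 <= (SS s - mm s * dd s) * x) by (apply Rmult_le_pos; lra).
      assert (0 <= SS s * (x - mm s * y)) by lra.
      apply (kz (SS s) _ (SS s * (x - mm s * y))); lra. }
    destruct (S_c (SS s * y - dd s * x) y _ _ L1 Hy (pP1c s Hs) (pP1r2 s Hs)) as [Sc Sc'].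
    destruct (kz _ _ _ Hk1 I1) as [K1 [_ K3]].
    specialize (K1 Sc).
    assert (G : 1 + bb s <= (x - mm s * y) + (cc s * y + bb s * x)) by (apply sq_ge; lra).
    split; [lra|].
    intro Heq.
    assert (Hy0 : y = 0).
    { apply Sc'; apply K3.
      assert (((x - mm s * y) + (cc s * y + bb s * x))^2 <= (1 + bb s)^2) by (apply sq_le; lra). lra. }
    subst y. assert (x = 1) by (apply x1; auto). subst x.
    left. repeat split; lra.
  - assert (L1' : 0 < SS s * y - dd s * x) by lra.
    destruct (Rle_dec y x) as [Y|Y].
    + assert (Q := L_quad_pos (x - y) (SS s * y - dd s * x) _ _ _ ltac:(lra) ltac:(lra) (pP1r2 s Hs) (pP2c s Hs) (pP2r2 s Hs) ltac:(right; lra)).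
      destruct (kz _ _ _ Hk2 I2) as [_ [K2 _]].
      specialize (K2 Q).
      assert (G : 1 + bb s <= ((1 - dd s) * x + bb s * y) + (cc s * y + bb s * x)) by (apply sq_ge; lra).
      split; [lra|].
      intro Heq. exfalso.
      assert ((((1 - dd s) * x + bb s * y) + (cc s * y + bb s * x))^2 <= (1 + bb s)^2) by (apply sq_le; lra). lra.
    + assert (HQ3' : y + mm s * x <= H2) by lra.
      destruct (S_d x (y - x) _ _ Hx ltac:(lra) (pP3r1 s Hs) (pP3c s Hs)) as [Sd Sd'].
      assert (G : 1 + bb s <= ((1 - dd s) * x + bb s * y) + (y + mm s * x)) by (apply sq_ge; lra).
      split; [lra|].
      intro Heq.
      assert (Hx0 : x = 0).
      { apply Sd'.
        assert ((((1 - dd s) * x + bb s * y) + (y + mm s * x))^2 <= (1 + bb s)^2) by (apply sq_le; lra). lra. }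
      subst x. assert (y = 1) by nra. subst y.
      right. repeat split; lra.
Qed.

Lemma HB_R s x y H1 H2 : HB s x y H1 H2 -> HB s (-y) x H2 H1.
Proof.
  intros H p Hp. destruct (H p Hp) as [A B]. split; [exact B|].
  unfold pdot in *. replace (fst p * - x + snd p * - y) with (-(fst p * x + snd p * y)) by ring.
  rewrite Rabs_Ropp. exact A.
Qed.

Lemma quad_reduce s (F : R -> R -> R -> R -> Prop) :
  (forall x y h1 h2, F (-y) x h2 h1 -> F x y h1 h2) ->
  (forall x y h1 h2, 0 <= x -> 0 <= y -> x^2+y^2 = 1 -> HB s x y h1 h2 -> F x y h1 h2) ->
  forall x y h1 h2, x^2+y^2 = 1 -> HB s x y h1 h2 -> F x y h1 h2.
Proof.
  intros Finv FQ x y h1 h2 Hu H.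
  destruct (Rle_dec 0 x) as [X|X]; destruct (Rle_dec 0 y) as [Y|Y].
  - apply FQ; auto.
  - apply Finv. apply FQ; [lra|lra| |apply HB_R; auto]. rewrite <- Hu; ring.
  - apply Finv, Finv, Finv. apply FQ; [lra|lra| |apply HB_R, HB_R, HB_R; auto]. rewrite <- Hu; ring.
  - apply Finv, Finv. apply FQ; [lra|lra| |apply HB_R, HB_R; auto]. rewrite <- Hu; ring.
Qed.

Definition Good (x0 y0 a0 b0 x y h1 h2 : R) : Prop :=
  (((x = x0 /\ y = y0) \/ (x = -x0 /\ y = -y0)) /\ h1 = a0 /\ h2 = b0) \/
  (((x = -y0 /\ y = x0) \/ (x = y0 /\ y = -x0)) /\ h1 = b0 /\ h2 = a0).

Lemma Good_R x0 y0 a0 b0 x y h1 h2 : Good x0 y0 a0 b0 (-y) x h2 h1 -> Good x0 y0 a0 b0 x y h1 h2.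
Proof.
  unfold Good. intros [[[[e1 e2]|[e1 e2]] [e3 e4]]|[[[e1 e2]|[e1 e2]] [e3 e4]]].
  - right. split; [right; split; lra | split; lra].
  - right. split; [left; split; lra | split; lra].
  - left. split; [left; split; lra | split; lra].
  - left. split; [right; split; lra | split; lra].
Qed.

Lemma unit_pos_eq s x y co si : 0 < s <= 1/1000 -> 0 <= x -> 0 <= y -> x^2+y^2=1 ->
  0 < co -> co^2+si^2 = 1 -> SS s * y = dd s * x -> SS s * si = dd s * co -> x = co /\ y = si.
Proof.
  intros Hs Hx Hy Hu Hco Hcs E1 E2.
  pose proof (fS s Hs).
  assert (A1 : x^2 * LL2 s = SS s ^ 2).
  { unfold LL2. replace (x^2 * (SS s ^ 2 + dd s ^ 2)) with (SS s^2 * x^2 + (dd s * x)^2) by ring.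
    rewrite <- E1. transitivity (SS s^2 * (x^2+y^2)); [ring | rewrite Hu; ring]. }
  assert (A2 : co^2 * LL2 s = SS s ^ 2).
  { unfold LL2. replace (co^2 * (SS s ^ 2 + dd s ^ 2)) with (SS s^2 * co^2 + (dd s * co)^2) by ring.
    rewrite <- E2. transitivity (SS s^2 * (co^2+si^2)); [ring | rewrite Hcs; ring]. }
  pose proof (fL2 s Hs).
  assert (x^2 = co^2) by (apply (Rmult_eq_reg_r (LL2 s)); lra).
  assert (Ex : x = co).
  { assert ((x - co) * (x + co) = 0) by (rewrite <- Rminus_0_r; ring_simplify; lra).
    apply Rmult_integral in H2. destruct H2; lra. }
  subst x. split; auto.
  apply (Rmult_eq_reg_l (SS s)); lra.
Qed.

Lemma area_all s co si : 0 < s <= 1/1000 -> 0 < co -> co^2+si^2 = 1 -> SS s * si = dd s * co ->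
  forall x y h1 h2, x^2+y^2 = 1 -> HB s x y h1 h2 ->
  NN s <= LL2 s * (h1*h2) /\
  (LL2 s * (h1*h2) <= NN s -> Good co si (co - mm s * si) (cc s * si + bb s * co) x y h1 h2).
Proof.
  intros Hs Hco Hcs E.
  apply (quad_reduce s (fun x y h1 h2 => NN s <= LL2 s * (h1*h2) /\
     (LL2 s * (h1*h2) <= NN s -> Good co si (co - mm s * si) (cc s * si + bb s * co) x y h1 h2))).
  - intros x y h1 h2 [A B]. rewrite (Rmult_comm h1 h2). split; auto.
    intro C. apply Good_R. auto.
  - intros x y h1 h2 Hx Hy Hu H.
    destruct (area_q s x y h1 h2 Hs Hx Hy Hu H) as [A B]. split; auto.
    intro C. destruct (B C) as [E1 [E2 E3]].
    destruct (unit_pos_eq s x y co si Hs Hx Hy Hu Hco Hcs E1 E) as [-> ->].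
    left. split; [left; split; reflexivity | split; auto].
Qed.

Lemma perim_all s : 0 < s <= 1/1000 ->
  forall x y h1 h2, x^2+y^2 = 1 -> HB s x y h1 h2 ->
  1 + bb s <= h1 + h2 /\ (h1 + h2 <= 1 + bb s -> Good 1 0 1 (bb s) x y h1 h2).
Proof.
  intros Hs.
  apply (quad_reduce s (fun x y h1 h2 => 1 + bb s <= h1 + h2 /\ (h1 + h2 <= 1 + bb s -> Good 1 0 1 (bb s) x y h1 h2))).
  - intros x y h1 h2 [A B]. split; [lra|].
    intro C. apply Good_R. apply B. lra.
  - intros x y h1 h2 Hx Hy Hu H.
    destruct (perim_q s x y h1 h2 Hs Hx Hy Hu H) as [A B]. split; auto.
    intro C. destruct (B C) as [[-> [-> [-> ->]]]|[-> [-> [-> ->]]]].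
    + left. split; [left; split; reflexivity | split; reflexivity].
    + right. split; [left; split; lra | split; reflexivity].
Qed.

Lemma wsum_cons a w p P :
  wsum (a :: w) (p :: P) = (a * fst p + fst (wsum w P), a * snd p + snd (wsum w P)).
Proof. reflexivity. Qed.

Lemma hull_lin al be M : forall P w, length w = length P -> Forall (fun a => 0 <= a) w ->
  (forall p, In p P -> al * fst p + be * snd p <= M) ->
  al * fst (wsum w P) + be * snd (wsum w P) <= M * fold_right Rplus 0 w.
Proof.
  induction P as [|p P IH]; intros w Hl Hw HP.
  - destruct w; [|discriminate]. simpl. unfold wsum; simpl. lra.
  - destruct w as [|a w]; [discriminate|]. simpl in Hl. injection Hl as Hl.
    inversion Hw; subst.
    rewrite wsum_cons. simpl.
    assert (IH' := IH w Hl H2 (fun q Hq => HP q (or_intror Hq))).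
    assert (Hp := HP p (or_introl eq_refl)).
    assert (a * (al * fst p + be * snd p) <= a * M) by (apply Rmult_le_compat_l; lra).
    nra.
Qed.

Lemma hull_bound P al be M z : conv_hull P z ->
  (forall p, In p P -> al * fst p + be * snd p <= M) -> al * fst z + be * snd z <= M.
Proof.
  intros [w [Hl [Hw [H1 ->]]]] HP.
  pose proof (hull_lin al be M P w Hl Hw HP). rewrite H1 in H. lra.
Qed.

Lemma wsum_zero P : forall w, Forall (fun a => a = 0) w -> wsum w P = (0, 0).
Proof.
  induction P as [|p P IH]; intros w Hw.
  - destruct w; reflexivity.
  - destruct w as [|a w]; [reflexivity|]. inversion Hw; subst.
    rewrite wsum_cons, IH by auto. simpl. f_equal; ring.
Qed.

Lemma hull_vertex P p : In p P -> conv_hull P p.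
Proof.
  induction P as [|q P IH]; intros H; [destruct H|].
  destruct H as [->|H].
  - exists (1 :: repeat 0 (length P)). split; [simpl; rewrite repeat_length; auto|].
    split; [constructor; [lra| apply Forall_forall; intros a Ha; apply repeat_spec in Ha; lra]|].
    split.
    + simpl. clear. induction (length P); simpl; lra.
    + rewrite wsum_cons, wsum_zero.
      * destruct p; simpl; f_equal; ring.
      * apply Forall_forall; intros a Ha; apply repeat_spec in Ha; auto.
  - destruct (IH H) as [w [Hl [Hw [H1 E]]]].
    exists (0 :: w). split; [simpl; auto|]. split; [constructor; auto; lra|].
    split; [simpl; lra|]. rewrite wsum_cons, <- E. destruct p; simpl; f_equal; ring.
Qed.

Definition vneg (p : pt) : pt := (- fst p, - snd p).
Definition Poly s : list pt := [v1 s; v2 s; v3 s; vneg (v1 s); vneg (v2 s); vneg (v3 s)].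

Lemma abs_sum a k h : Rabs (a - k) <= h -> Rabs (-a - k) <= h -> Rabs a + Rabs k <= h.
Proof.
  unfold Rabs; destruct (Rcase_abs (a - k)); destruct (Rcase_abs (-a - k));
  destruct (Rcase_abs a); destruct (Rcase_abs k); lra.
Qed.

Lemma enc_HB s r : encloses r (conv_hull (Poly s)) ->
  HB s (cos (rth r)) (sin (rth r))
     (ha r - Rabs (pdot (rc r) (cos (rth r)) (sin (rth r))))
     (hb r - Rabs (pdot (rc r) (- sin (rth r)) (cos (rth r)))).
Proof.
  intros [_ Hin] p Hp.
  assert (A := Hin p (hull_vertex (Poly s) p ltac:(unfold Poly; simpl in Hp |- *; tauto))).
  assert (B := Hin (vneg p) (hull_vertex (Poly s) (vneg p) ltac:(unfold Poly; simpl in Hp |- *; destruct Hp as [<-|[<-|[<-|[]]]]; tauto))).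
  destruct r as [[c1 c2] th h1 h2]. unfold in_rect, dot, sub, dir_u, dir_v, vneg, pdot in *; simpl in *.
  destruct A as [A1 A2]; destruct B as [B1 B2].
  split.
  - assert (Rabs (fst p * cos th + snd p * sin th) + Rabs (c1 * cos th + c2 * sin th) <= h1); [|lra].
    apply abs_sum.
    + replace (fst p * cos th + snd p * sin th - (c1 * cos th + c2 * sin th)) with
        ((fst p - c1) * cos th + (snd p - c2) * sin th) by ring. auto.
    + replace (- (fst p * cos th + snd p * sin th) - (c1 * cos th + c2 * sin th)) with
        ((- fst p - c1) * cos th + (- snd p - c2) * sin th) by ring. auto.
  - assert (Rabs (fst p * - sin th + snd p * cos th) + Rabs (c1 * - sin th + c2 * cos th) <= h2); [|lra].
    apply abs_sum.
    + replace (fst p * - sin th + snd p * cos th - (c1 * - sin th + c2 * cos th)) with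
        ((fst p - c1) * - sin th + (snd p - c2) * cos th) by ring. auto.
    + replace (- (fst p * - sin th + snd p * cos th) - (c1 * - sin th + c2 * cos th)) with
        ((- fst p - c1) * - sin th + (- snd p - c2) * cos th) by ring. auto.
Qed.

Lemma HB_nonneg s x y h1 h2 : HB s x y h1 h2 -> 0 <= h1 /\ 0 <= h2.
Proof.
  intros H. destruct (H (v1 s)) as [A B]; [simpl; auto|].
  pose proof (Rabs_pos (pdot (v1 s) x y)). pose proof (Rabs_pos (pdot (v1 s) (-y) x)). lra.
Qed.

Lemma enc_info s r : encloses r (conv_hull (Poly s)) ->
  exists k1 k2, 0 <= k1 /\ 0 <= k2 /\
   HB s (cos (rth r)) (sin (rth r)) (ha r - k1) (hb r - k2) /\
   (k1 = 0 -> k2 = 0 -> rc r = (0,0)) /\ cos (rth r) ^ 2 + sin (rth r) ^ 2 = 1.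
Proof.
  intros H. pose proof (enc_HB s r H) as HH.
  exists (Rabs (pdot (rc r) (cos (rth r)) (sin (rth r)))), (Rabs (pdot (rc r) (- sin (rth r)) (cos (rth r)))).
  split; [apply Rabs_pos|]. split; [apply Rabs_pos|]. split; [exact HH|].
  assert (U : cos (rth r) ^ 2 + sin (rth r) ^ 2 = 1).
  { pose proof (sin2_cos2 (rth r)). unfold Rsqr in H0. lra. }
  split; [|exact U].
  intros K1 K2.
  destruct (rc r) as [c1 c2]. unfold pdot in K1, K2; simpl in K1, K2.
  set (x := cos (rth r)) in *. set (y := sin (rth r)) in *.
  assert (E1 : c1 * x + c2 * y = 0) by (destruct (Req_dec (c1 * x + c2 * y) 0); auto; apply Rabs_no_R0 in H0; lra).
  assert (E2 : c1 * - y + c2 * x = 0) by (destruct (Req_dec (c1 * - y + c2 * x) 0); auto; apply Rabs_no_R0 in H0; lra).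
  assert (c1 = x * (c1 * x + c2 * y) - y * (c1 * - y + c2 * x)).
  { transitivity (c1 * (x^2 + y^2)); [rewrite U; ring | ring]. }
  assert (c2 = y * (c1 * x + c2 * y) + x * (c1 * - y + c2 * x)).
  { transitivity (c2 * (x^2 + y^2)); [rewrite U; ring | ring]. }
  rewrite E1, E2 in *. f_equal; lra.
Qed.

Lemma Rabs_opp_eq a b : a = - b -> Rabs a = Rabs b.
Proof. intros ->. apply Rabs_Ropp. Qed.

Lemma same_rect_good r r' : rc r = (0,0) -> rc r' = (0,0) ->
  Good (cos (rth r)) (sin (rth r)) (ha r) (hb r) (cos (rth r')) (sin (rth r')) (ha r') (hb r') ->
  same_rect r r'.
Proof.
  destruct r as [c th h1 h2]; destruct r' as [c' th' h1' h2']; simpl.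
  intros -> -> G z. unfold in_rect, dot, sub, dir_u, dir_v; simpl.
  destruct G as [[[[e1 e2]|[e1 e2]] [e3 e4]]|[[[e1 e2]|[e1 e2]] [e3 e4]]]; rewrite e1, e2, e3, e4.
  - tauto.
  - rewrite (Rabs_opp_eq ((fst z - 0) * - cos th + (snd z - 0) * - sin th) ((fst z - 0) * cos th + (snd z - 0) * sin th)) by ring.
    rewrite (Rabs_opp_eq ((fst z - 0) * - - sin th + (snd z - 0) * - cos th) ((fst z - 0) * - sin th + (snd z - 0) * cos th)) by ring.
    tauto.
  - replace ((fst z - 0) * - sin th + (snd z - 0) * cos th) with ((fst z - 0) * - sin th + (snd z - 0) * cos th) by ring.
    rewrite (Rabs_opp_eq ((fst z - 0) * - cos th + (snd z - 0) * - sin th) ((fst z - 0) * cos th + (snd z - 0) * sin th)) by ring.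
    tauto.
  - rewrite (Rabs_opp_eq ((fst z - 0) * sin th + (snd z - 0) * - cos th) ((fst z - 0) * - sin th + (snd z - 0) * cos th)) by ring.
    replace ((fst z - 0) * - - cos th + (snd z - 0) * sin th) with ((fst z - 0) * cos th + (snd z - 0) * sin th) by ring.
    tauto.
Qed.

Definition thA s := atan (dd s / SS s).
Definition haA s := cos (thA s) - mm s * sin (thA s).
Definition hbA s := cc s * sin (thA s) + bb s * cos (thA s).
Definition RA s := Rect (0,0) (thA s) (haA s) (hbA s).
Definition RP s := Rect (0,0) 0 1 (bb s).

Lemma trig_facts s : 0 < s <= 1/1000 ->
  0 < cos (thA s) /\ 0 < sin (thA s) /\ cos (thA s) ^ 2 + sin (thA s) ^ 2 = 1 /\
  SS s * sin (thA s) = dd s * cos (thA s) /\ 0 < thA s < PI / 2.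
Proof.
  intros Hs. pose proof (fS s Hs). pose proof (fd s Hs).
  assert (Hz : 0 < dd s / SS s) by (apply Rdiv_lt_0_compat; lra).
  assert (U : cos (thA s) ^ 2 + sin (thA s) ^ 2 = 1).
  { pose proof (sin2_cos2 (thA s)). unfold Rsqr in H1. lra. }
  assert (T : 0 < thA s < PI/2).
  { unfold thA. split; [rewrite <- atan_0; apply atan_increasing; lra|].
    pose proof (atan_bound (dd s / SS s)). lra. }
  unfold thA in *. rewrite sin_atan, cos_atan in *.
  set (q := sqrt (1 + (dd s / SS s)²)).
  assert (Hq : 0 < q) by (apply sqrt_lt_R0; unfold Rsqr; nra).
  repeat split; auto.
  - apply Rdiv_lt_0_compat; lra.
  - apply Rdiv_lt_0_compat; lra.
  - field. lra.
  - lra.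
  - lra.
Qed.

Lemma HB_sym s x y h : (forall p, In p [v1 s; v2 s; v3 s] -> Rabs (pdot p x y) <= h) ->
  forall p, In p (Poly s) -> x * fst p + y * snd p <= h.
Proof.
  intros H p Hp. unfold Poly in Hp.
  assert (G : forall q, In q [v1 s; v2 s; v3 s] -> x * fst q + y * snd q <= h /\ x * fst (vneg q) + y * snd (vneg q) <= h).
  { intros q Hq. apply H in Hq. apply abs_le in Hq. unfold pdot, vneg in *; simpl. split; lra. }
  simpl in Hp. destruct Hp as [<-|[<-|[<-|[<-|[<-|[<-|[]]]]]]].
  all: first [apply G; simpl; tauto | apply (proj2 (G _ ltac:(simpl; tauto)))].
Qed.

Lemma encl_of_HB s r : rc r = (0,0) -> valid_rect r -> HB s (cos (rth r)) (sin (rth r)) (ha r) (hb r) ->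
  encloses r (conv_hull (Poly s)).
Proof.
  intros Hc Hv H. split; auto. intros z Hz.
  unfold in_rect, dot, sub, dir_u, dir_v. rewrite Hc. simpl.
  set (x := cos (rth r)) in *. set (y := sin (rth r)) in *.
  assert (A1 : forall p, In p [v1 s; v2 s; v3 s] -> Rabs (pdot p x y) <= ha r) by (intros; apply H; auto).
  assert (A2 : forall p, In p [v1 s; v2 s; v3 s] -> Rabs (pdot p (-y) x) <= hb r) by (intros; apply H; auto).
  assert (A1' : forall p, In p [v1 s; v2 s; v3 s] -> Rabs (pdot p (-x) (-y)) <= ha r).
  { intros p Hp. unfold pdot. replace (fst p * - x + snd p * - y) with (- (fst p * x + snd p * y)) by ring.
    rewrite Rabs_Ropp. apply A1; auto. }
  assert (A2' : forall p, In p [v1 s; v2 s; v3 s] -> Rabs (pdot p y (-x)) <= hb r).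
  { intros p Hp. unfold pdot. replace (fst p * y + snd p * - x) with (- (fst p * - y + snd p * x)) by ring.
    rewrite Rabs_Ropp. apply A2; auto. }
  pose proof (hull_bound _ _ _ _ z Hz (HB_sym s x y _ A1)).
  pose proof (hull_bound _ _ _ _ z Hz (HB_sym s _ _ _ A1')).
  pose proof (hull_bound _ _ _ _ z Hz (HB_sym s _ _ _ A2)).
  pose proof (hull_bound _ _ _ _ z Hz (HB_sym s _ _ _ A2')).
  split; apply Rabs_le; split; lra.
Qed.

Lemma pos_by_S S e co k : 0 < S -> S * e = co * k -> 0 < co -> 0 < k -> 0 < e.
Proof. intros. assert (0 < co * k) by (apply Rmult_lt_0_compat; auto).
  apply (Rmult_lt_reg_l S); lra. Qed.
Lemma nneg_by_S S e co k : 0 < S -> S * e = co * k -> 0 < co -> 0 <= k -> 0 <= e.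
Proof. intros. assert (0 <= co * k) by (apply Rmult_le_pos; lra).
  apply (Rmult_le_reg_l S); lra. Qed.

Lemma k1 s : 0 < s <= 1/1000 -> 0 < cc s * dd s + bb s * SS s - (SS s - mm s * dd s).
Proof. unfold SS, cc, dd, bb, mm. intros [H1 H2]. assert (s*s <= s/1000) by nra. nra. Qed.
Lemma k2 s : 0 < s <= 1/1000 -> 0 <= (cc s - 1) * dd s + (bb s - mm s) * SS s.
Proof. unfold SS, cc, dd, bb, mm. intros [H1 H2]. assert (s*s <= s/1000) by nra. nra. Qed.

Lemma RA_facts s : 0 < s <= 1/1000 ->
  LL2 s * (haA s * hbA s) = NN s /\ 0 < haA s /\ haA s < hbA s /\
  HB s (cos (thA s)) (sin (thA s)) (haA s) (hbA s).
Proof.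
  intros Hs. destruct (trig_facts s Hs) as [Hco [Hsi [U [E _]]]].
  unfold haA, hbA.
  set (co := cos (thA s)) in *. set (si := sin (thA s)) in *.
  pose proof (fSd s Hs). pose proof (fd s Hs). pose proof (fS s Hs). pose proof (fSmd s Hs).
  pose proof (fm s Hs). pose proof (fb s Hs). pose proof (fc s Hs). pose proof (fd1 s Hs).
  pose proof (fL2 s Hs).
  assert (Eha : SS s * (co - mm s * si) = co * (SS s - mm s * dd s)).
  { transitivity (SS s * co - mm s * (SS s * si)); [ring | rewrite E; ring]. }
  assert (Ehb : SS s * (cc s * si + bb s * co) = co * (cc s * dd s + bb s * SS s)).
  { transitivity (cc s * (SS s * si) + bb s * SS s * co); [ring | rewrite E; ring]. }
  assert (Hha : 0 < co - mm s * si) by (apply (pos_by_S _ _ _ _ H1 Eha); lra).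
  assert (Hk : 0 < cc s * dd s + bb s * SS s).
  { assert (0 < cc s * dd s) by (apply Rmult_lt_0_compat; lra).
    assert (0 < bb s * SS s) by (apply Rmult_lt_0_compat; lra). lra. }
  assert (Hhb : 0 < cc s * si + bb s * co) by (apply (pos_by_S _ _ _ _ H1 Ehb); lra).
  assert (A2 : co ^ 2 * LL2 s = SS s ^ 2).
  { unfold LL2. replace (co^2 * (SS s ^ 2 + dd s ^ 2)) with (SS s^2 * co^2 + (dd s * co)^2) by ring.
    rewrite <- E. transitivity (SS s^2 * (co^2+si^2)); [ring | rewrite U; ring]. }
  split; [|split; [exact Hha|split]].
  - apply (Rmult_eq_reg_l (SS s ^ 2)); [|apply pow_nonzero; lra].
    transitivity (LL2 s * ((SS s * (co - mm s * si)) * (SS s * (cc s * si + bb s * co)))); [ring|].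
    rewrite Eha, Ehb. unfold NN. rewrite <- A2. ring.
  - assert (0 < (cc s * si + bb s * co) - (co - mm s * si)); [|lra].
    apply (pos_by_S (SS s) _ co (cc s * dd s + bb s * SS s - (SS s - mm s * dd s)));
      [lra | rewrite Rmult_minus_distr_l, Eha, Ehb; ring | lra | apply k1; auto].
  - intros p Hp. simpl in Hp. unfold pdot.
    assert (0 <= mm s * co) by (apply Rmult_le_pos; lra).
    assert (0 <= mm s * si) by (apply Rmult_le_pos; lra).
    assert (0 <= bb s * co) by (apply Rmult_le_pos; lra).
    assert (0 <= bb s * si) by (apply Rmult_le_pos; lra).
    assert (0 <= cc s * co) by (apply Rmult_le_pos; lra).
    assert (0 <= cc s * si) by (apply Rmult_le_pos; lra).
    assert (0 <= (1 - dd s) * co) by (apply Rmult_le_pos; lra).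
    assert (0 <= (1 - dd s) * si) by (apply Rmult_le_pos; lra).
    destruct Hp as [<-|[<-|[<-|[]]]]; unfold v1, v2, v3; simpl; split; apply Rabs_le.
    + split; lra.
    + assert (0 <= (cc s * si + bb s * co) - (si + mm s * co)); [|lra].
      apply (nneg_by_S (SS s) _ co ((cc s - 1) * dd s + (bb s - mm s) * SS s));
      [lra | transitivity ((cc s - 1) * (SS s * si) + (bb s - mm s) * SS s * co); [ring | rewrite E; ring]
       | lra | apply k2; auto].
    + assert ((1 - dd s) * co + bb s * si = co - mm s * si); [|lra].
      apply (Rmult_eq_reg_l (SS s)); [|lra].
      transitivity (SS s * co - dd s * SS s * co + bb s * (SS s * si)); [ring|rewrite E].
      rewrite Eha. unfold SS. ring.
    + assert (0 <= (cc s + 1 - dd s) * si) by (apply Rmult_le_pos; unfold cc, dd in *; lra).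
      assert (0 <= (cc s - 1 + dd s) * si) by (apply Rmult_le_pos; unfold cc, dd in *; lra).
      split; lra.
    + split.
      * assert (0 <= (1 - cc s) * co) by (apply Rmult_le_pos; unfold cc in *; lra).
        assert (0 <= (bb s - mm s) * si) by (apply Rmult_le_pos; unfold bb, mm in *; lra). lra.
      * assert (0 < co - mm s * si - (- cc s * co + bb s * si)); [|lra].
        replace (co - mm s * si - (- cc s * co + bb s * si)) with (co * (1 + cc s - dd s)).
        { apply Rmult_lt_0_compat; [lra | unfold cc, dd in *; lra]. }
        transitivity ((1 + cc s) * co - SS s * si); [rewrite E; ring | unfold SS; ring].
    + split; lra.
Qed.

Lemma Good_pos x0 y0 a0 b0 x y h1 h2 : Good x0 y0 a0 b0 x y h1 h2 -> 0 < a0 -> 0 < b0 -> 0 < h1 /\ 0 < h2.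
Proof. unfold Good. intros [[_ [-> ->]]|[_ [-> ->]]]; auto. Qed.

Lemma kk h1 h2 k1 k2 : 0 < h1 -> 0 < h2 -> 0 <= k1 -> 0 <= k2 -> (h1 + k1) * (h2 + k2) <= h1 * h2 -> k1 = 0 /\ k2 = 0.
Proof.
  intros. assert (0 <= h1 * k2) by (apply Rmult_le_pos; lra).
  assert (0 <= k1 * h2) by (apply Rmult_le_pos; lra).
  assert (0 <= k1 * k2) by (apply Rmult_le_pos; lra).
  assert (h1 * k2 = 0) by nra. assert (k1 * h2 = 0) by nra.
  split.
  - apply (Rmult_eq_reg_r h2); lra.
  - apply (Rmult_eq_reg_l h1); lra.
Qed.

Lemma RA_unique s : 0 < s <= 1/1000 -> unique_min_area (conv_hull (Poly s)) (RA s).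
Proof.
  intros Hs.
  destruct (RA_facts s Hs) as [Harea [Hha [Hlt HBA]]].
  destruct (trig_facts s Hs) as [Hco [Hsi [U [E Hth]]]].
  pose proof (fL2 s Hs) as HL2.
  assert (Henc : encloses (RA s) (conv_hull (Poly s))).
  { apply encl_of_HB; [reflexivity | split; simpl; lra | exact HBA]. }
  split.
  - split; auto. intros r' Hr'. unfold rect_area; simpl.
    destruct (enc_info s r' Hr') as [k1 [k2 [K1 [K2 [HH [Hc U']]]]]].
    destruct (area_all s _ _ Hs Hco U E _ _ _ _ U' HH) as [Low _].
    destruct (HB_nonneg _ _ _ _ _ HH) as [P1 P2].
    assert (M := L_prod _ _ _ _ P1 P2 (Rle_refl _) (Rle_refl _)).
    assert (M2 : (ha r' - k1) * (hb r' - k2) <= ha r' * hb r') by (apply L_prod; lra).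
    assert (haA s * hbA s <= ha r' * hb r'); [|lra].
    apply (Rmult_le_reg_l (LL2 s)); auto.
    assert (LL2 s * ((ha r' - k1) * (hb r' - k2)) <= LL2 s * (ha r' * hb r')) by (apply Rmult_le_compat_l; lra).
    lra.
  - intros r' [Hr' Hmin]. specialize (Hmin (RA s) Henc). unfold rect_area in Hmin; simpl in Hmin.
    destruct (enc_info s r' Hr') as [k1 [k2 [K1 [K2 [HH [Hc U']]]]]].
    destruct (area_all s _ _ Hs Hco U E _ _ _ _ U' HH) as [Low Eq].
    destruct (HB_nonneg _ _ _ _ _ HH) as [P1 P2].
    assert (M2 : (ha r' - k1) * (hb r' - k2) <= ha r' * hb r') by (apply L_prod; lra).
    assert (M3 : LL2 s * (ha r' * hb r') <= NN s).
    { rewrite <- Harea. apply Rmult_le_compat_l; lra. }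
    assert (M4 : LL2 s * ((ha r' - k1) * (hb r' - k2)) <= LL2 s * (ha r' * hb r')) by (apply Rmult_le_compat_l; lra).
    assert (G := Eq ltac:(lra)).
    destruct (Good_pos _ _ _ _ _ _ _ _ G ltac:(exact Hha) ltac:(exact (Rlt_trans _ _ _ Hha Hlt))) as [Q1 Q2].
    assert (HE : LL2 s * (ha r' * hb r') <= LL2 s * ((ha r' - k1) * (hb r' - k2))) by lra.
    apply Rmult_le_reg_l in HE; auto.
    destruct (kk (ha r' - k1) (hb r' - k2) k1 k2 Q1 Q2 K1 K2) as [-> ->].
    { replace (ha r' - k1 + k1) with (ha r') by ring. replace (hb r' - k2 + k2) with (hb r') by ring. auto. }
    apply same_rect_good; [reflexivity | auto |].
    replace (ha r') with (ha r' - 0) by ring. replace (hb r') with (hb r' - 0) by ring. exact G.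
Qed.

Lemma RP_HB s : 0 < s <= 1/1000 -> HB s (cos 0) (sin 0) 1 (bb s).
Proof.
  intros Hs. pose proof (fm s Hs). pose proof (fb s Hs). pose proof (fc s Hs). pose proof (fd1 s Hs).
  rewrite cos_0, sin_0. intros p Hp. simpl in Hp. unfold pdot.
  destruct Hp as [<-|[<-|[<-|[]]]]; unfold v1, v2, v3; simpl; split; apply Rabs_le;
  unfold mm, bb, cc, dd in *; split; lra.
Qed.

Lemma RP_unique s : 0 < s <= 1/1000 -> unique_min_perimeter (conv_hull (Poly s)) (RP s).
Proof.
  intros Hs. pose proof (fb s Hs) as Hb.
  assert (Henc : encloses (RP s) (conv_hull (Poly s))).
  { apply encl_of_HB; [reflexivity | split; simpl; lra | exact (RP_HB s Hs)]. }
  split.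
  - split; auto. intros r' Hr'. unfold rect_perimeter; simpl.
    destruct (enc_info s r' Hr') as [k1 [k2 [K1 [K2 [HH [Hc U']]]]]].
    destruct (perim_all s Hs _ _ _ _ U' HH) as [Low _]. lra.
  - intros r' [Hr' Hmin]. specialize (Hmin (RP s) Henc). unfold rect_perimeter in Hmin; simpl in Hmin.
    destruct (enc_info s r' Hr') as [k1 [k2 [K1 [K2 [HH [Hc U']]]]]].
    destruct (perim_all s Hs _ _ _ _ U' HH) as [Low Eq].
    assert (G := Eq ltac:(lra)).
    assert (k1 = 0) by lra. assert (k2 = 0) by lra. subst k1 k2.
    apply same_rect_good; [reflexivity | auto |].
    simpl. rewrite cos_0, sin_0.
    replace (ha r') with (ha r' - 0) by ring. replace (hb r') with (hb r' - 0) by ring. exact G.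
Qed.

Lemma poly_convex s : 0 < s <= 1/1000 -> convex_polygon (Poly s).
Proof.
  intros Hs. pose proof (fm s Hs). pose proof (fb s Hs). pose proof (fc s Hs). pose proof (fd1 s Hs).
  exists (0,0), (1/4). split; [lra|].
  intros [z1 z2] Hz. unfold dist2 in Hz; simpl in Hz.
  assert (B1 : -1/4 < z1 < 1/4) by (split; nra).
  assert (B2 : -1/4 < z2 < 1/4) by (split; nra).
  set (D := bb s * (1 - dd s + cc s)).
  assert (HD : 1 < D) by (unfold D, bb, dd, cc in *; nra).
  set (N1 := bb s * z1 + cc s * z2).
  set (N2 := (1 - dd s) * z2 - bb s * z1).
  assert (HN1 : - D / 2 <= N1 <= D / 2) by (unfold N1, bb, cc in *; split; nra).
  assert (HN2 : - D / 2 <= N2 <= D / 2) by (unfold N2, bb, dd in *; split; nra).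
  exists [0; (D + 2*N1)/(4*D); (D + 2*N2)/(4*D); 0; (D - 2*N1)/(4*D); (D - 2*N2)/(4*D)].
  split; [reflexivity|].
  assert (HiD : 0 < / (4 * D)) by (apply Rinv_0_lt_compat; lra).
  split.
  { apply Forall_forall. intros a Ha. simpl in Ha.
    destruct Ha as [<-|[<-|[<-|[<-|[<-|[<-|[]]]]]]]; try lra; unfold Rdiv; apply Rmult_le_pos; lra. }
  split.
  { simpl. field. lra. }
  unfold wsum, Poly, v1, v2, v3, vneg; simpl.
  unfold N1, N2, D. f_equal; field; unfold bb, dd, cc in *; nra.
Qed.

Theorem mainTheorem1 :
  forall eps : R, 0 < eps ->
  exists P : list pt,
    convex_polygon P /\
    exists RA RP : rect,
      unique_min_area (conv_hull P) RA /\
      unique_min_perimeter (conv_hull P) RP /\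
      forall dA dP : pt,
        orientation_dir RA dA -> orientation_dir RP dP ->
        line_angle dA dP > PI / 2 - eps.
Proof.
  intros eps Heps.
  set (e := Rmin eps 1).
  assert (He : 0 < e <= 1) by (unfold e; split; [apply Rmin_glb_lt; lra | apply Rmin_r]).
  assert (He2 : e <= eps) by (unfold e; apply Rmin_l).
  pose proof PI2_1.
  assert (Ht : 0 < tan e) by (apply tan_gt_0; lra).
  set (s := Rmin (1/1000) (tan e / 16)).
  assert (Hs : 0 < s <= 1/1000) by (unfold s; split; [apply Rmin_glb_lt; lra | apply Rmin_l]).
  assert (Hs2 : s <= tan e / 16) by (unfold s; apply Rmin_r).
  exists (Poly s). split; [apply poly_convex; auto|].
  exists (RA s), (RP s). split; [apply RA_unique; auto|]. split; [apply RP_unique; auto|].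
  destruct (RA_facts s Hs) as [_ [Hha [Hlt _]]].
  destruct (trig_facts s Hs) as [Hco [Hsi [U [E Hth]]]].
  intros dA dP HA HP.
  destruct HA as [[h _]|[_ ->]]; [simpl in h; lra|].
  destruct HP as [[_ ->]|[h _]]; [|simpl in h; unfold bb in h; lra].
  unfold line_angle, dot, dir_v, dir_u; simpl. rewrite cos_0, sin_0.
  replace (- sin (thA s) * 1 + cos (thA s) * 0) with (- sin (thA s)) by ring.
  rewrite Rabs_Ropp, Rabs_right by lra.
  rewrite <- cos_shift, acos_cos by lra.
  assert (thA s < e); [|lra].
  unfold thA. rewrite <- (atan_tan e) by lra.
  apply atan_increasing.
  pose proof (fS s Hs). pose proof (fd s Hs).
  apply (Rmult_lt_reg_r (SS s)); [lra|].
  unfold Rdiv. rewrite Rmult_assoc, Rinv_l, Rmult_1_r by lra.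
  unfold dd, SS, bb, mm in *. nra.
Qed.
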